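(* Under the standing setup below, assume $h\in(0,d_{min})$. If $g$ is a continuous bounded function on $\mathcal L(t)$ such that $Q_hg=g$, where $Q_hg(x)=\int_{\mathcal L(t)}q_h(x,y)g(y)\,\mu^t(dy)$, then $g$ is constant on each connected component $\mathcal C_1,\dots,\mathcal C_\ell$ of $\mathcal L(t)$.
   Context: Standing setup. Let $X_1$ be a random vector in $\mathbb R^d$ with law $\mu$ having a Lebesgue density $f$. For $s\in\mathbb R$ let $\mathcal L(s)=\{x\in\mathbb R^d: f(x)\ge s\}$. A level $t>0$ in the interior of the range of $f$ is fixed; $\mathcal L(t)$ is nonempty and compact, with finitely many connected components $\mathcal C_1,\dots,\mathcal C_\ell$, and $d_{min}=\min_{i\neq j}\mathrm{dist}(\mathcal C_i,\mathcal C_j)$. Assumption 1: (i) $f$ is of class $C^2$ on $\mathbb R^d$; (ii) $\|D_xf\|>0$ on $\{x: f(x)=t\}$; (iii) $f$, $D_xf$, $D_x^2f$ are uniformly bounded on $\mathbb R^d$. $B$ denotes the unit ball of $\mathbb R^d$ centered at $0$. Assumption 2: $k:\mathbb R^d\to\mathbb R_+$ satisfies (i) $k$ is $C^2$; (ii) the support of $k$ is $B$; (iii) $k$ is bounded from below on $B/2$ by a positive number; (iv) $k(-x)=k(x)$. For $h>0$, $k_h(u)=k(u/h)$. $\mu^t$ is the conditional law of $X_1$ given $X_1\in\mathcal L(t)$; $K_h(x)=\int_{\mathcal L(t)}k_h(y-x)\,\mu^t(dy)$; $q_h(x,y)=k_h(y-x)/K_h(x)$. *)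

(* Defs.v *)
From HB Require Import structures.
From mathcomp Require Import all_boot all_order all_algebra.
From mathcomp Require Import all_classical all_reals all_analysis.
Set Implicit Arguments. Unset Strict Implicit. Unset Printing Implicit Defensive.
Import Order.TTheory GRing.Theory Num.Theory.
Import numFieldNormedType.Exports.
Local Open Scope classical_set_scope.
Local Open Scope ring_scope.

(* R^d with its Borel sigma-algebra (generated by the open sets of the
   usual (product = Euclidean) topology on 'rV[R]_d). *)
Definition Rd (R : realType) (d : nat) := g_sigma_algebraType (@open 'rV[R]_d).

Definition enorm (R : realType) (d : nat) (x : 'rV[R]_d) : R :=
  Num.sqrt (\sum_(i < d) x ord0 i ^+ 2).

Definition set_dist (R : realType) (d : nat) (A B : set 'rV[R]_d) : R :=
  inf [set enorm (x - y) | x in A & y in B].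

Definition eball (R : realType) (d : nat) (r : R) : set 'rV[R]_d :=
  [set x | enorm x <= r].

Definition evec (R : realType) (d : nat) (i : 'I_d) : 'rV[R]_d := delta_mx ord0 i.
Arguments evec {R d}.

Definition partial (R : realType) (d : nat) (i : 'I_d) (f : 'rV[R]_d -> R)
  : 'rV[R]_d -> R := fun x => 'D_(evec i) f x.

Definition grad (R : realType) (d : nat) (f : 'rV[R]_d -> R) (x : 'rV[R]_d)
  : 'rV[R]_d := \row_i partial i f x.

Definition C2 (R : realType) (d : nat) (f : 'rV[R]_d -> R) : Prop :=
  continuous f /\
  (forall i x, derivable f x (evec i)) /\
  (forall i, continuous (partial i f)) /\
  (forall i j x, derivable (partial i f) x (evec j)) /\
  (forall i j, continuous (partial j (partial i f))).

Definition Lset (R : realType) (d : nat) (f : 'rV[R]_d -> R) (s : R) : set 'rV[R]_d :=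
  [set x | s <= f x].

Definition kh (R : realType) (d : nat) (k : 'rV[R]_d -> R) (h : R) (u : 'rV[R]_d) : R :=
  k (h^-1 *: u).

Definition Kh (R : realType) (d : nat) (mut : {measure set (Rd R d) -> \bar R})
  (L : set 'rV[R]_d) (k : 'rV[R]_d -> R) (h : R) (x : 'rV[R]_d) : R :=
  Rintegral mut L (fun y : Rd R d => kh k h (y - x)).

Definition qh (R : realType) (d : nat) (mut : {measure set (Rd R d) -> \bar R})
  (L : set 'rV[R]_d) (k : 'rV[R]_d -> R) (h : R) (x y : 'rV[R]_d) : R :=
  kh k h (y - x) / Kh mut L k h x.

Definition Qh (R : realType) (d : nat) (mut : {measure set (Rd R d) -> \bar R})
  (L : set 'rV[R]_d) (k : 'rV[R]_d -> R) (h : R) (g : 'rV[R]_d -> R)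
  (x : 'rV[R]_d) : R :=
  Rintegral mut L (fun y : Rd R d => qh mut L k h x y * g y).

(* Main.v *)
Require Import Defs.
From HB Require Import structures.
From mathcomp Require Import all_boot all_order all_algebra.
From mathcomp Require Import all_classical all_reals all_analysis.
From mathcomp Require Import ring lra measurable_realfun.
Import Order.TTheory GRing.Theory Num.Theory.
Import numFieldNormedType.Exports.
Local Open Scope classical_set_scope.
Local Open Scope ring_scope.
Set Implicit Arguments. Unset Strict Implicit. Unset Printing Implicit Defensive.

Lemma sum_sq_le (R : realType) n (a : 'I_n -> R) : (forall i, 0 <= a i) ->
  \sum_(i < n) a i ^+ 2 <= (\sum_(i < n) a i) ^+ 2.
Proof.
elim: n a => [|n IH] a a0; first by rewrite !big_ord0 expr0n.
rewrite !big_ord_recr /=.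
have h1 := IH (fun i => a (widen_ord (leqnSn n) i)) (fun i => a0 _).
have h2 : 0 <= \sum_(i < n) a (widen_ord (leqnSn n) i) by apply: sumr_ge0.
have h3 := a0 ord_max.
set S := \sum_(i < n) _ in h1 h2 *; set T := \sum_(i < n) _ in h1 h2 *.
nra.
Qed.

Lemma enorm_ge0 (R : realType) d (u : 'rV[R]_d) : 0 <= enorm u.
Proof. exact: sqrtr_ge0. Qed.

Lemma enorm_le_sum (R : realType) d (u : 'rV[R]_d) :
  enorm u <= \sum_(i < d) `|u ord0 i|.
Proof.
rewrite /enorm.
have T0 : 0 <= \sum_(i < d) `|u ord0 i| by apply: sumr_ge0.
rewrite -(ger0_norm T0) -sqrtr_sqr ler_sqrt ?exprn_ge0 //.
under eq_bigr do rewrite -real_normK ?num_real //.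
exact: sum_sq_le.
Qed.

Lemma coord_le_norm (R : realType) d (u : 'rV[R]_d) i : `|u ord0 i| <= `|u|.
Proof.
rewrite [leRHS]/Num.Def.normr /= mx_normrE. apply/bigmax_geP; right => /=. by exists (ord0, i).
Qed.

Lemma norm_lt_coord (R : realType) d (u : 'rV[R]_d) e : 0 < e -> (forall i, `|u ord0 i| < e) -> `|u| < e.
Proof.
move=> e0 H; rewrite [ltLHS]/Num.Def.normr /= mx_normrE. apply/bigmax_ltP; split => //= -[a b] _.
by rewrite (ord1 a).
Qed.

Lemma enorm_le_norm (R : realType) d (u : 'rV[R]_d) : enorm u <= d%:R * `|u|.
Proof.
apply: (le_trans (enorm_le_sum u)).
have -> : d%:R * `|u| = \sum_(i < d) `|u| by rewrite sumr_const card_ord mulr_natl.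
by apply: ler_sum => i _; apply: coord_le_norm.
Qed.

Lemma enormZ (R : realType) d (a : R) (u : 'rV[R]_d) : enorm (a *: u) = `|a| * enorm u.
Proof.
rewrite /enorm -sqrtr_sqr -sqrtrM ?sqr_ge0 // mulr_sumr.
by congr Num.sqrt; apply: eq_bigr => i _; rewrite mxE exprMn.
Qed.

Lemma enormN (R : realType) d (u : 'rV[R]_d) : enorm (- u) = enorm u.
Proof. by rewrite /enorm; congr Num.sqrt; apply: eq_bigr => i _; rewrite mxE sqrrN. Qed.

Lemma enormB (R : realType) d (u v : 'rV[R]_d) : enorm (u - v) = enorm (v - u).
Proof. by rewrite -enormN opprB. Qed.

Lemma coord_le_enorm (R : realType) d (u : 'rV[R]_d) i : `|u ord0 i| <= enorm u.
Proof.
rewrite /enorm -sqrtr_sqr ler_sqrt ?sumr_ge0 // => [|j _]; last exact: sqr_ge0.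
rewrite (bigD1 i) //= lerDl; apply: sumr_ge0 => j _; exact: sqr_ge0.
Qed.

Lemma open_meas (R : realType) d (A : set 'rV[R]_d) : open A -> measurable (A : set (Rd R d)).
Proof. by move=> oA; apply: sub_sigma_algebra. Qed.

Lemma within_meas (R : realType) d (D : set (Rd R d)) (phi : 'rV[R]_d -> R) :
  measurable D -> {within (D : set 'rV[R]_d), continuous phi} -> measurable_fun D (phi : Rd R d -> R).
Proof.
move=> mD /continuousP cf.
apply: (@measurability _ _ (Rd R d) R D (phi : Rd R d -> R) _ (measurable_realfun.RGenOpens.measurableE R)).
move=> _ [_ [a [b ->]] <-].
have /open_subspaceP [V oV VD] := cf _ (@itv_open _ R a b).
rewrite setIC -VD; apply: measurableI => //; exact: open_meas.
Qed.

Lemma bounded_of (T : Type) (R : realType) (A : set T) (F : T -> R) M :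
  (forall x, A x -> `|F x| <= M) -> [bounded F x | x in A].
Proof.
move=> H; exists M; split; first exact: num_real.
move=> M' HM' x Ax; exact: le_trans (H x Ax) (ltW HM').
Qed.

Lemma within_integrable (R : realType) d (mut : {measure set (Rd R d) -> \bar R})
  (L : set 'rV[R]_d) (F : 'rV[R]_d -> R) :
  measurable (L : set (Rd R d)) -> compact L -> L !=set0 -> (mut L < +oo)%E ->
  {within L, continuous F} -> mut.-integrable (L : set (Rd R d)) (EFin \o (F : Rd R d -> R)).
Proof.
move=> mL cL L0 fin cF.
apply: measurable_bounded_integrable => //; first exact: within_meas.
have cnF : {within L, continuous (fun x => `|F x|)}.
  move=> x; apply: (continuous_comp (cF x)); exact: norm_continuous.
have [c _ Hc] := EVT_max_rV L0 cL cnF.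
apply: (bounded_of (M := `|F c|)) => x Lx; apply: Hc; exact/mem_set.
Qed.

Lemma box_meas (R : realType) d (a b : 'rV[R]_d) :
  measurable [set x : Rd R d | forall i, a ord0 i <= x ord0 i < b ord0 i].
Proof.
have -> : [set x : Rd R d | forall i, a ord0 i <= x ord0 i < b ord0 i] =
  \bigcap_(i in [set: 'I_d]) ((fun x : Rd R d => x ord0 i) @^-1` `[a ord0 i, b ord0 i[).
  apply/seteqP; split => x /= H.
    move=> i _; rewrite /= in_itv /=; exact: H.
  move=> i; have := H i I; by rewrite /= in_itv.
apply: fin_bigcap_measurable; first exact: finite_finset.
move=> i _; rewrite -[X in measurable X]setTI.
apply: (within_meas (D := setT)) => //.
  apply: continuous_subspaceT; exact: coord_continuous.
Qed.

Lemma box_pos (R : realType) (d : nat) (lam : {measure set (Rd R d) -> \bar R})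
  (Hlam : forall a b : 'rV[R]_d, (forall i, a ord0 i <= b ord0 i) ->
     lam [set x : Rd R d | forall i, a ord0 i <= x ord0 i < b ord0 i]
       = (\prod_(i < d) (b ord0 i - a ord0 i))%:E)
  (mu : {measure set (Rd R d) -> \bar R}) (f : 'rV[R]_d -> R)
  (Hfmeas : measurable_fun setT (f : Rd R d -> R))
  (Hdens : forall A : set (Rd R d), measurable A ->
     mu A = (\int[lam]_(x in A) (f x)%:E)%E)
  (t : R) (Ht0 : 0 < t) (z : 'rV[R]_d) (rho : R) (rho0 : 0 < rho)
  (Hz : forall w, ball z rho w -> t < f w) :
  exists B : set (Rd R d), [/\ measurable B, (B `<=` ball z rho) & (0 < mu B)%E].
Proof.
set a := z - const_mx (rho / 2); set b := z + const_mx (rho / 2).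
set B := [set x : Rd R d | forall i, a ord0 i <= x ord0 i < b ord0 i].
have mB : measurable B by apply: box_meas.
have BS : B `<=` ball z rho.
  move=> w Bw; rewrite -ball_normE /=; apply: norm_lt_coord => // i.
  have := Bw i; rewrite /a /b !mxE => /andP [h1 h2].
  rewrite ltr_norml; apply/andP; split; lra.
exists B; split => //.
have ab : forall i, a ord0 i <= b ord0 i.
  move=> i; rewrite /a /b !mxE; lra.
rewrite Hdens //.
apply: (@lt_le_trans _ _ (\int[lam]_(x in B) (cst t%:E) x)%E).
  rewrite integral_cst // Hlam // -EFinM lte_fin; apply: mulr_gt0 => //.
  apply: prodr_gt0 => i _; rewrite /a /b !mxE; lra.
apply: ge0_le_integral => //.
- move=> x _; rewrite lee_fin; exact: ltW.
- apply/measurable_EFinP; apply: measurable_funS Hfmeas => //.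
- move=> x Bx; rewrite lee_fin; apply: ltW; apply: Hz; exact: BS.
Qed.

Lemma near_pos (R : realType) (d : nat) (f : 'rV[R]_d -> R) (HfC2 : C2 f) (t : R)
  (Hgrad : forall x, f x = t -> 0 < enorm (grad f x)) (y : 'rV[R]_d) (r : R) :
  t <= f y -> 0 < r -> exists z, ball y r z /\ t < f z.
Proof.
move=> ty r0.
have [lt|eq] := ltrP t (f y); first by exists y; split => //; exact: ballxx.
have fy : f y = t by apply/eqP; rewrite eq_le eq ty.
have [i Hi] : exists i, partial i f y != 0.
  apply: contrapT => H.
  have H0 : forall i, partial i f y = 0.
    move=> i; apply/eqP; apply/negPn/negP => Hn; apply: H; by exists i.
  have := Hgrad y fy; rewrite /enorm big1 ?sqrtr0 ?ltxx // => j _.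
  by rewrite /grad mxE H0 expr0n.
set p := partial i f y in Hi.
have Hq := proj1 (proj2 HfC2) i y.
have Hq2 : (fun h : R => h^-1 *: ((f \o shift y) (h *: evec i) - f y)) @ 0^' --> p := Hq.
have p0 : 0 < `|p| by rewrite normr_gt0.
have Hq' := cvgr_dist_lt _ _ Hq2 _ p0.
case: Hq' => /= e e0 He.
set m := Num.min e r.
have m0 : 0 < m by rewrite lt_min e0 r0.
set eta := m / (2 * (`|p| + 1)).
have eta0 : 0 < eta by rewrite divr_gt0 // mulr_gt0 // ltr_wpDl.
set s := eta * p.
have sm : `|s| < m.
  rewrite /s normrM (gtr0_norm eta0) /eta.
  have q0 : 0 < 2 * (`|p| + 1) by rewrite mulr_gt0 // ltr_wpDl.
  rewrite mulrAC ltr_pdivrMr // ltr_pM2l //.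
  have := normr_ge0 p; lra.
have me : m <= e by rewrite ge_min lexx.
have mr : m <= r by rewrite ge_min lexx orbT.
have s0 : s != 0 by rewrite mulf_neq0 // gt_eqF.
exists (s *: evec i + y); split.
  rewrite -ball_normE /=; apply: norm_lt_coord => // j.
  rewrite !mxE /= opprD addrCA subrr addr0 normrN.
  case: (j == i); rewrite /= ?mulr1 ?mulr0 ?normr0 //; lra.
have := He s; rewrite /= sub0r normrN => /(_ (lt_le_trans sm me) s0).
rewrite fy; set D := f _ - t.
set Q := s^-1 *: D.
move=> HQ.
have pQ : 0 < p * Q.
  have HQ2 : `|(p : R) - (Q : R)| < `|(p : R)| by exact: HQ.
  have [pp|pn|pz] := ltrgt0P p.
  - move: HQ2; rewrite (gtr0_norm pp) ltr_norml => /andP [_ h]; apply: mulr_gt0 => //; lra.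
  - move: HQ2; rewrite (ltr0_norm pn) ltr_norml => /andP [h _]; rewrite nmulr_rgt0 //; lra.
  - by move: Hi; rewrite pz eqxx.
have E : p * Q = eta^-1 * D.
  rewrite /Q /s; change (p * ((eta * p)^-1 * D) = eta^-1 * D); field; by rewrite Hi gt_eqF.
rewrite E in pQ.
have : 0 < eta * (eta^-1 * D) by apply: mulr_gt0.
rewrite mulrA mulfV ?gt_eqF // mul1r /D; lra.
Qed.

Lemma mut_pos (R : realType) (d : nat) (lam : {measure set (Rd R d) -> \bar R})
  (Hlam : forall a b : 'rV[R]_d, (forall i, a ord0 i <= b ord0 i) ->
     lam [set x : Rd R d | forall i, a ord0 i <= x ord0 i < b ord0 i]
       = (\prod_(i < d) (b ord0 i - a ord0 i))%:E)
  (mu : {measure set (Rd R d) -> \bar R}) (f : 'rV[R]_d -> R)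
  (Hmu1 : mu setT = 1%E)
  (Hfmeas : measurable_fun setT (f : Rd R d -> R))
  (Hdens : forall A : set (Rd R d), measurable A ->
     mu A = (\int[lam]_(x in A) (f x)%:E)%E)
  (t : R) (Ht0 : 0 < t) (HfC2 : C2 f)
  (Hgrad : forall x, f x = t -> 0 < enorm (grad f x))
  (mut : {measure set (Rd R d) -> \bar R})
  (Hmut : forall A : set (Rd R d), measurable A ->
     mut A = (mu (A `&` Lset f t) * ((fine (mu (Lset f t)))^-1)%:E)%E)
  (mL : measurable (Lset f t : set (Rd R d)))
  (y : 'rV[R]_d) (r : R) : Lset f t y -> 0 < r ->
  (0 < mut (Lset f t `&` ball y r))%E.
Proof.
move=> Ly r0.
have r20 : 0 < r / 2 by rewrite divr_gt0.
have [z [yz tz]] := near_pos HfC2 Hgrad Ly r20.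
have := cvgr_gt _ (proj1 HfC2 z) _ tz.
move=> H; have H2 : \forall w \near z, t < f w by apply: H.
have [rho rho0 Hrho] := (nbhs_ballP _ _).1 H2.
set rho' := Num.min rho (r / 2).
have rho'0 : 0 < rho' by rewrite lt_min rho0 r20.
have Hz : forall w, ball z rho' w -> t < f w.
  move=> w bw; apply: Hrho; apply: le_ball bw; rewrite ge_min lexx //.
have [B [mB BS Bpos]] := box_pos Hlam Hfmeas Hdens Ht0 rho'0 Hz.
have BL : B `<=` Lset f t `&` ball y r.
  move=> w Bw; split; first by apply: ltW; apply: Hz; exact: BS.
  have bw : ball z (r / 2) w.
    by apply: le_ball (BS _ Bw); rewrite ge_min lexx orbT.
  by have := ball_triangle yz bw; rewrite -splitr.
have mLb : measurable (Lset f t `&` ball y r : set (Rd R d)).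
  by apply: measurableI => //; apply: open_meas; exact: ball_open.
have BL' : B `<=` Lset f t by move=> w /BL [].
have muL1 : (mu (Lset f t) <= 1)%E by rewrite -Hmu1; apply: le_measure; rewrite ?inE.
have muLpos : (0 < mu (Lset f t))%E.
  apply: (lt_le_trans Bpos); apply: le_measure => //; rewrite ?inE //.
have muLfin : mu (Lset f t) \is a fin_num.
  rewrite ge0_fin_numE; last exact: ltW.
  by apply: (le_lt_trans muL1); rewrite ltry.
have fpos : 0 < fine (mu (Lset f t)).
  by apply: fine_gt0; rewrite muLpos /= (le_lt_trans muL1) // ltry.
rewrite Hmut //; apply: mule_gt0; last by rewrite lte_fin invr_gt0.
apply: (lt_le_trans Bpos); apply: le_measure; rewrite ?inE //.
  by apply: measurableI.
by move=> w Bw; split; [exact: BL|exact: BL'].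
Qed.

Lemma LB (R : realType) d (mut : {measure set (Rd R d) -> \bar R})
  (L A : set (Rd R d)) (F : Rd R d -> R) (a : R) :
  measurable L -> measurable A -> A `<=` L -> (mut L < +oo)%E ->
  mut.-integrable L (EFin \o F) -> (forall x, L x -> 0 <= F x) ->
  (forall x, A x -> a <= F x) -> 0 <= a ->
  a * fine (mut A) <= Rintegral mut L F.
Proof.
move=> mL mA AL Lfin iF F0 Fa a0.
have Afin : mut A \is a fin_num.
  rewrite ge0_fin_numE // (le_lt_trans _ Lfin) //; apply: le_measure; rewrite ?inE //.
have [mF _] := integrableP _ _ _ iF.
rewrite -lee_fin /Rintegral fineK; last exact: integrable_fin_num.
rewrite EFinM fineK // -integral_cst //.
apply: (@le_trans _ _ (\int[mut]_(x in A) (F x)%:E)%E).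
  apply: ge0_le_integral => //.
    exact: (measurable_funS mL AL mF).
apply: (ge0_subset_integral mut mA mL mF) => //.
Qed.

Lemma set_dist_le (R : realType) d (A B : set 'rV[R]_d) x z :
  A x -> B z -> set_dist A B <= enorm (x - z).
Proof.
move=> Ax Bz; apply: ge_inf.
  exists 0 => r [u Au [v Bv <-]]; exact: enorm_ge0.
by exists x => //; exists z.
Qed.

Lemma within_ball (R : realType) d (L : set 'rV[R]_d) (g : 'rV[R]_d -> R) z e :
  {within L, continuous g} -> L z -> 0 < e ->
  exists2 r, 0 < r & forall w, L w -> ball z r w -> `|g z - g w| < e.
Proof.
move=> cg Lz e0.
have h1 := (subspace_continuousP _ _).1 cg z Lz.
have h2 : \forall w \near within L (nbhs z), `|g z - g w| < e.
  by apply: (cvgr_dist_lt _ _ h1).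
have [r r0 Hr] := (nbhs_ballP _ _).1 h2.
by exists r => // w Lw bw; apply: Hr.
Qed.
Unset Implicit Arguments.
Theorem propositionC2 (R : realType) (d : nat)
  (* Lebesgue measure on the Borel sets of R^d (characterized on boxes) *)
  (lam : {measure set (Rd R d) -> \bar R})
  (Hlam : forall a b : 'rV[R]_d, (forall i, a ord0 i <= b ord0 i) ->
     lam [set x : Rd R d | forall i, a ord0 i <= x ord0 i < b ord0 i]
       = (\prod_(i < d) (b ord0 i - a ord0 i))%:E)
  (* mu: law of X_1, with Lebesgue density f *)
  (mu : {measure set (Rd R d) -> \bar R})
  (f : 'rV[R]_d -> R)
  (Hmu1 : mu setT = 1%E)
  (Hf0 : forall x, 0 <= f x)
  (Hfmeas : measurable_fun setT (f : Rd R d -> R))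
  (Hdens : forall A : set (Rd R d), measurable A ->
     mu A = (\int[lam]_(x in A) (f x)%:E)%E)
  (* the level t *)
  (t : R) (Ht0 : 0 < t) (Htint : ((range f)°) t)
  (HLne : Lset f t !=set0) (HLcpt : compact (Lset f t))
  (* connected components C_1, ..., C_ell of L(t) *)
  (ell : nat) (C : 'I_ell -> set 'rV[R]_d)
  (HCcomp : forall i, exists2 x, Lset f t x & C i = connected_component (Lset f t) x)
  (HCinj : forall i j, C i = C j -> i = j)
  (HCcover : forall x, Lset f t x -> exists i, C i x)
  (* Assumption 1 *)
  (HfC2 : C2 f)
  (Hgrad : forall x, f x = t -> 0 < enorm (grad f x))
  (Hfbd : exists M : R, forall x,
     `|f x| <= M /\ (forall i, `|partial i f x| <= M) /\
     (forall i j, `|partial j (partial i f) x| <= M))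
  (* Assumption 2 *)
  (k : 'rV[R]_d -> R)
  (Hk0 : forall u, 0 <= k u)
  (HkC2 : C2 k)
  (Hksupp : closure [set u | k u != 0] = @eball R d 1)
  (Hklow : exists2 c : R, 0 < c & forall u, @eball R d (1/2) u -> c <= k u)
  (Hksym : forall u, k (- u) = k u)
  (* mu^t: conditional law of X_1 given X_1 in L(t) *)
  (mut : {measure set (Rd R d) -> \bar R})
  (Hmut : forall A : set (Rd R d), measurable A ->
     mut A = (mu (A `&` Lset f t) * ((fine (mu (Lset f t)))^-1)%:E)%E)
  (* bandwidth h in (0, d_min) *)
  (h : R) (Hh0 : 0 < h)
  (Hhdmin : forall i j, i != j -> h < set_dist (C i) (C j))
  (* g continuous, bounded on L(t), with Q_h g = g *)
  (g : 'rV[R]_d -> R)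
  (Hgcont : {within Lset f t, continuous g})
  (Hgbd : exists M : R, forall x, Lset f t x -> `|g x| <= M)
  (HQg : forall x, Lset f t x -> Qh mut (Lset f t) k h g x = g x) :
  forall i x y, C i x -> C i y -> g x = g y.
Proof.
move=> i x y Cx Cy.
set L := Lset f t.
have fcont := proj1 HfC2.
have kcont := proj1 HkC2.
have mL : measurable (L : set (Rd R d)).
  have -> : (L : set (Rd R d)) = f @^-1` `[t, +oo[%classic.
    by apply/seteqP; split => z /=; rewrite in_itv /= andbT.
  rewrite -[X in measurable X]setTI; apply: Hfmeas => //; exact: measurable_itv.
have Lclosed : closed L by apply: compact_closed HLcpt; exact: norm_hausdorff.
have muL1 : (mu L <= 1)%E by rewrite -Hmu1; apply: le_measure; rewrite ?inE.
have mutLfin : (mut L < +oo)%E.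
  rewrite Hmut // setIid.
  have muLfin : mu L \is a fin_num.
    rewrite ge0_fin_numE //; by apply: (le_lt_trans muL1); rewrite ltry.
  have : (mu L * ((fine (mu L))^-1)%:E)%E \is a fin_num by rewrite fin_numM.
  by move/fin_numPlt => /andP [_ ->].
have kzero : forall u, 1 < enorm u -> k u = 0.
  move=> u u1; apply/eqP; apply/negPn/negP => ku.
  have : closure [set u | k u != 0] u by apply: subset_closure.
  rewrite Hksupp /eball /=; lra.
have [c0 c0pos Hc] := Hklow.
set eps := h / (2 * (d%:R + 1)).
have d10 : 0 < d%:R + 1 :> R by rewrite ltr_wpDl.
have eps0 : 0 < eps by rewrite divr_gt0 // mulr_gt0.
have epsb : forall u : 'rV[R]_d, `|u| < eps -> enorm u <= h / 2.
  move=> u hu; apply: (le_trans (enorm_le_norm u)).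
  apply: (@le_trans _ _ (d%:R * eps)); first by apply: ler_wpM2l => //; exact: ltW.
  rewrite /eps mulrA ler_pdivrMr ?mulr_gt0 //.
  have : 0 <= d%:R :> R by [].
  have := Hh0; nra.
have khpos : forall z x1, enorm (z - x1) <= h / 2 -> c0 <= kh k h (z - x1).
  move=> z x1 hz; rewrite /kh; apply: Hc; rewrite /eball /= enormZ gtr0_norm ?invr_gt0 //.
  rewrite ler_pdivrMl // mulrC; lra.
have khzero : forall z x1, h < enorm (z - x1) -> kh k h (z - x1) = 0.
  move=> z x1 hz; rewrite /kh; apply: kzero; rewrite enormZ gtr0_norm ?invr_gt0 //.
  by rewrite ltr_pdivlMl // mulr1.
have comp : forall j x1 z, C j x1 -> L z -> enorm (z - x1) <= h -> C j z.
  move=> j x1 z Cx1 Lz hz; have [j' Cj'] := HCcover z Lz.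
  have [->//|neq] := eqVneq j j'.
  have := Hhdmin _ _ neq; have := set_dist_le Cx1 Cj'; rewrite enormB; lra.
have [x0 Lx0 Cdef] := HCcomp i.
have CiL : C i `<=` L by rewrite Cdef; exact: connected_component_sub.
have Ciclosed : closed (C i) by rewrite Cdef; exact: component_closed.
have Cicpt : compact (C i) by apply: subclosed_compact HLcpt CiL.
have gCi : {within C i, continuous g} by apply: continuous_subspaceW Hgcont.
have [cm cmCi Hmax] := EVT_max_rV (ex_intro _ x Cx) Cicpt gCi.
set M := g cm.
have gle : forall z, C i z -> g z <= M by move=> z Cz; apply: Hmax; exact/mem_set.
have finepos : forall w r, L w -> 0 < r -> 0 < fine (mut (L `&` ball w r)).
  move=> w r Lw r0; apply: fine_gt0.
  rewrite (mut_pos Hlam Hmu1 Hfmeas Hdens Ht0 HfC2 Hgrad Hmut mL Lw r0) /=.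
  apply: le_lt_trans mutLfin; apply: le_measure; rewrite ?inE //.
  by apply: measurableI => //; apply: open_meas; exact: ball_open.
have mLb : forall w r, measurable (L `&` ball w r : set (Rd R d)).
  by move=> w r; apply: measurableI => //; apply: open_meas; exact: ball_open.
have integ : forall F : 'rV[R]_d -> R, {within L, continuous F} ->
    mut.-integrable (L : set (Rd R d)) (EFin \o (F : Rd R d -> R)).
  by move=> F cF; apply: within_integrable.
have core : forall x1, C i x1 -> g x1 = M -> forall z, L z -> `|x1 - z| < eps -> g z = M.
  move=> x1 Cx1 gx1 z Lz xz.
  have Lx1 := CiL _ Cx1.
  have cF1 : continuous (fun w : 'rV[R]_d => kh k h (w - x1)).
    move=> w.
    have H1 : {for w, continuous (fun w0 : 'rV[R]_d => h^-1 *: (w0 - x1))}.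
      have H0 : {for w, continuous (fun w0 : 'rV[R]_d => (w0 - x1))}.
        apply: (@continuousB _ _ _ id (cst x1) w); last exact: cst_continuous.
        by [].
      exact: (continuousZl_tmp (k := h^-1) H0).
    exact: (continuous_comp H1 (kcont _)).
  have cF1w : forall w, L w -> (fun w => kh k h (w - x1)) @ within L (nbhs w) --> kh k h (w - x1).
    have cF1L : {within L, continuous (fun w => kh k h (w - x1))}.
      exact: continuous_subspaceT.
    by move=> w Lw; have := (subspace_continuousP _ _).1 cF1L w Lw.
  have cgw : forall w, L w -> g @ within L (nbhs w) --> g w.
    by move=> w Lw; have := (subspace_continuousP _ _).1 Hgcont w Lw.
  set F1 := fun w : 'rV[R]_d => kh k h (w - x1).
  set F2 := fun w : 'rV[R]_d => kh k h (w - x1) * g w.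
  set F3 := fun w : 'rV[R]_d => kh k h (w - x1) * (M - g w).
  set F4 := fun w : 'rV[R]_d => M * kh k h (w - x1).
  have iF1 : mut.-integrable (L : set (Rd R d)) (EFin \o (F1 : Rd R d -> R)).
    apply: integ; exact: continuous_subspaceT.
  have iF2 : mut.-integrable (L : set (Rd R d)) (EFin \o (F2 : Rd R d -> R)).
    apply: integ; apply/(subspace_continuousP _ _).2 => w Lw.
    exact: cvgM (cF1w w Lw) (cgw w Lw).
  have iF3 : mut.-integrable (L : set (Rd R d)) (EFin \o (F3 : Rd R d -> R)).
    apply: integ; apply/(subspace_continuousP _ _).2 => w Lw.
    apply: cvgM (cF1w w Lw) _; apply: cvgB; [exact: cvg_cst|exact: cgw].
  have iF4 : mut.-integrable (L : set (Rd R d)) (EFin \o (F4 : Rd R d -> R)).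
    apply: integ; apply/(subspace_continuousP _ _).2 => w Lw.
    apply: cvgM (cF1w w Lw); exact: cvg_cst.
  set Kx := Rintegral mut (L : set (Rd R d)) (F1 : Rd R d -> R).
  have inball : forall w, ball x1 eps w -> enorm (w - x1) <= h / 2.
    move=> w; rewrite -ball_normE /= => bw; rewrite enormB; exact: epsb.
  have Kpos : 0 < Kx.
    have := finepos x1 eps Lx1 eps0.
    have := @LB R d mut (L : set (Rd R d)) (L `&` ball x1 eps) (F1 : Rd R d -> R) c0 mL (mLb x1 eps)
      (fun w => @proj1 _ _) mutLfin iF1.
    move=> /(_ (fun w _ => Hk0 _)) /(_ (fun w Aw => khpos _ _ (inball _ (proj2 Aw)))) /(_ (ltW c0pos)).
    move=> H1 H2; apply: lt_le_trans H1; exact: mulr_gt0.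
  have eqF2 : Rintegral mut (L : set (Rd R d)) (F2 : Rd R d -> R) = M * Kx.
    have E : Qh mut (Lset f t) k h g x1 = Kx^-1 * Rintegral mut (L : set (Rd R d)) (F2 : Rd R d -> R).
      rewrite -RintegralZl //; apply: eq_Rintegral => w _.
      rewrite /qh; change (Kh mut (Lset f t) k h x1) with Kx; rewrite /F2; ring.
    have := HQg x1 Lx1; rewrite gx1 E => H.
    by rewrite -H mulrAC mulVf ?mul1r // gt_eqF.
  have eqF3 : Rintegral mut (L : set (Rd R d)) (F3 : Rd R d -> R) = 0.
    have -> : Rintegral mut (L : set (Rd R d)) (F3 : Rd R d -> R) =
        Rintegral mut (L : set (Rd R d)) (fun y : Rd R d => F4 y - F2 y).
      by apply: eq_Rintegral => w _; rewrite /F2 /F3 /F4; ring.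
    rewrite RintegralB // eqF2.
    have -> : Rintegral mut (L : set (Rd R d)) (F4 : Rd R d -> R) =
        Rintegral mut (L : set (Rd R d)) (fun y : Rd R d => M * F1 y) by [].
    by rewrite RintegralZl // subrr.
  have F3ge0 : forall w, L w -> 0 <= F3 w.
    move=> w Lw; rewrite /F3.
    have [->|kn] := eqVneq (kh k h (w - x1)) 0; first by rewrite mul0r.
    have hw : enorm (w - x1) <= h.
      rewrite leNgt; apply/negP => hw; move: kn; by rewrite khzero ?eqxx.
    have Cw := comp _ _ _ Cx1 Lw hw.
    apply: mulr_ge0; first exact: Hk0.
    by rewrite subr_ge0; apply: gle.
  have zb : enorm (z - x1) <= h / 2 by apply: inball; rewrite -ball_normE.
  have Cz : C i z by apply: (comp _ _ _ Cx1 Lz); apply: (le_trans zb); lra.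
  apply/eqP; rewrite eq_le gle //=; rewrite leNgt; apply/negP => gzM.
  set del := (M - g z) / 2.
  have del0 : 0 < del by rewrite divr_gt0 // subr_gt0.
  have [r r0 Hr] := within_ball Hgcont Lz del0.
  set r' := Num.min r (eps - `|x1 - z|).
  have r'0 : 0 < r' by rewrite lt_min r0 subr_gt0 xz.
  have HA : forall w, (L `&` ball z r') w -> c0 * del <= F3 w.
    move=> w [Lw bw].
    have bw1 : ball z r w by apply: le_ball bw; rewrite ge_min lexx.
    have bw2 : `|z - w| < eps - `|x1 - z|.
      by move: bw; rewrite -ball_normE /= lt_min => /andP [_ ->].
    have bxw : ball x1 eps w.
      rewrite -ball_normE /=; apply: (le_lt_trans (ler_distD z x1 w)).
      by rewrite -ltrBrDl.
    have k1 := khpos _ _ (inball _ bxw).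
    have g1 := Hr w Lw bw1.
    have g2 : del <= M - g w.
      have e2 : M - g z = del + del by rewrite /del -splitr.
      move: g1; rewrite ltr_norml => /andP [h2 _]; lra.
    rewrite /F3; apply: ler_pM => //; exact: ltW.
  have := @LB R d mut (L : set (Rd R d)) (L `&` ball z r') (F3 : Rd R d -> R) (c0 * del) mL (mLb z r')
      (fun w => @proj1 _ _) mutLfin iF3 F3ge0 HA.
  rewrite eqF3 => /(_ (ltW (mulr_gt0 c0pos del0))).
  have := finepos z r' Lz r'0.
  have := mulr_gt0 c0pos del0.
  move=> h1 h2 h3.
  have := mulr_gt0 h1 h2; lra.
set S := C i `&` [set z | g z = M].
have conn : connected (C i) by rewrite Cdef; exact: component_connected.
have SC : S = C i.
  apply: conn.
  - by exists cm; split => //; exact: set_mem.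
  - exists (\bigcup_(x1 in S) ball x1 eps).
      by apply: bigcup_open => x1 _; exact: ball_open.
    apply/seteqP; split.
      move=> z [Cz gz]; split => //; exists z => //; exact: ballxx.
    move=> z [Cz [x1 [Cx1 gx1] bz]]; split => //.
    apply: (core x1 Cx1 gx1 z (CiL _ Cz)); by move: bz; rewrite -ball_normE.
  - exists (closure S); first exact: closed_closure.
    apply/seteqP; split.
      move=> z Sz; split; [exact: Sz.1|exact: subset_closure].
    move=> z [Cz clz]; split => //=.
    apply: contrapT => gz.
    have e0 : 0 < `|g z - M| by rewrite normr_gt0 subr_eq0; apply/eqP.
    have [r r0 Hr] := within_ball Hgcont (CiL _ Cz) e0.
    have [w [[Cw gw] bw]] := clz _ (nbhsx_ballx z _ r0).
    have := Hr w (CiL _ Cw) bw; rewrite gw ltxx //.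
have Sx : S x by rewrite SC.
have Sy : S y by rewrite SC.
by rewrite Sx.2 Sy.2.
Qed.
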